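(* For the hypercube $Q_n$: $str(Q_2)\ge6$, $str(Q_3)\ge11$, $str(Q_4)\ge21$, and $str(Q_n)\ge 2^n+4n-12$ for all $n\ge5$.
   Context: $Q_n$ is the $n$-dimensional hypercube (vertex set $\mathbb Z_2^n$, adjacency iff differing in exactly one coordinate), of order $2^n$. For a graph $G$ of order $p$, a numbering is a bijection $f:V(G)\to[1,p]$; $str_f(G)=\max\{f(u)+f(v): uv\in E(G)\}$ and $str(G)=\min_f str_f(G)$. *)

(* Defs.v *)
From mathcomp Require Import all_boot all_order.
Set Implicit Arguments. Unset Strict Implicit. Unset Printing Implicit Defensive.

Definition hvert (n : nat) := {ffun 'I_n -> bool}.

Definition hadj (n : nat) (u v : hvert n) : bool :=
  #|[set i : 'I_n | u i != v i]| == 1.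

(* A numbering of a graph on a finite vertex type V of order p = #|V|:
   a bijection f : V -> [1, p].  We represent it as an injective
   g : V -> 'I_p (hence bijective), with f x = g x + 1. *)
Definition numbering (V : finType) := {ffun V -> 'I_#|V|}.

Definition is_numbering (V : finType) (g : numbering V) : bool := injectiveb g.

Definition numv (V : finType) (g : numbering V) (x : V) : nat := (g x).+1.

Definition strf (V : finType) (e : rel V) (g : numbering V) : nat :=
  \max_(u : V) \max_(v : V | e u v) (numv g u + numv g v).

(* str(G) = min over numberings f of str_f(G).  The default value
   2 * #|V| is an upper bound for every str_f, so it does not affect
   the minimum (the set of numberings is nonempty). *)
Definition strength (V : finType) (e : rel V) : nat :=
  \big[minn/(2 * #|V|)]_(g : numbering V | is_numbering g) strf e g.

Definition str_hypercube (n : nat) : nat := strength (@hadj n).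

(* Main.v *)
Require Import Defs.
From mathcomp Require Import all_boot all_order.
From mathcomp Require Import zify.
Set Implicit Arguments. Unset Strict Implicit.

Lemma xor3 (T : eqType) (i a c e f : T) : i != a -> i != c -> a != c ->
 (i==e)(+)(i==f) -> (a==e)(+)(a==f) -> (c==e)(+)(c==f) -> False.
Proof.
move=> /eqP ia /eqP ic /eqP ac.
case: (i =P e) => ?; case: (i =P f) => ?; case: (a =P e) => ?; case: (a =P f) => ?;
case: (c =P e) => ?; case: (c =P f) => ? //= _ _ _; congruence.
Qed.

Section Cube.
Variable n : nat.
Implicit Types u v w x : hvert n.

Definition flip u (i : 'I_n) : hvert n := [ffun j => u j (+) (j == i)].
Definition nb u : {set hvert n} := [set x | hadj u x].

Lemma flipC u i j : flip (flip u i) j = flip (flip u j) i.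
Proof. apply/ffunP => k; rewrite !ffunE; by case: (u k); case: (k == i); case: (k == j). Qed.

Lemma flipK u i : flip (flip u i) i = u.
Proof. apply/ffunP => k; rewrite !ffunE; by case: (u k); case: (k == i). Qed.

Lemma adj_flip u i : hadj u (flip u i).
Proof.
rewrite /hadj (_ : [set j | u j != flip u i j] = [set i]) ?cards1 //.
apply/setP => j; rewrite !inE ffunE; by case: (u j); case: (j == i).
Qed.

Lemma adjP u x : hadj u x -> exists i, x = flip u i.
Proof.
rewrite /hadj => /cards1P [i Hi]; exists i; apply/ffunP => j.
have := congr1 (fun S : {set 'I_n} => j \in S) Hi; rewrite !inE ffunE => H; rewrite -H.
by case: (u j); case: (x j).
Qed.

Lemma adj_sym u x : hadj u x = hadj x u.
Proof. rewrite /hadj.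
rewrite (_ : [set i | u i != x i] = [set i | x i != u i]) //.
apply/setP => i. by rewrite !inE eq_sym. Qed.

Lemma flip_inj u : injective (flip u).
Proof.
move=> i j /(congr1 (fun z : hvert n => z i)); rewrite !ffunE eqxx.
by case: (u i); case: eqP.
Qed.

Lemma card_nb u : #|nb u| = n.
Proof.
have -> : nb u = flip u @: [set: 'I_n].
  apply/setP => x; rewrite inE; apply/idP/imsetP.
  - by move/adjP => [i ->]; exists i.
  - by move=> [i _ ->]; apply: adj_flip.
by rewrite card_imset ?cardsT ?card_ord //; apply: flip_inj.
Qed.

Lemma inter_shape u v x : u != v -> x \in nb u -> x \in nb v ->
  exists i j, [/\ i != j, x = flip u i & v = flip (flip u i) j].
Proof.
rewrite !inE => Huv /adjP [i ->]; rewrite adj_sym => /adjP [j Hv].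
exists i, j; split => //.
by apply/eqP => Eij; move: Huv; rewrite Hv Eij flipK eqxx.
Qed.

Lemma inter_le u v : u != v -> #|nb u :&: nb v| <= 2.
Proof.
move=> Huv.
case: (set_0Vmem (nb u :&: nb v)) => [-> | [x]]; first by rewrite cards0.
rewrite inE => /andP [Hxu Hxv].
have [i [j [Hij _ Hv]]] := inter_shape Huv Hxu Hxv.
apply: (@leq_trans #|flip u @: [set i; j]|); last first.
  by apply: leq_trans (leq_imset_card _ _) _; rewrite cards2; case: (i != j).
apply: subset_leq_card; apply/subsetP => y; rewrite inE => /andP [Hyu Hyv].
have [i' [j' [Hij' Hy Hv']]] := inter_shape Huv Hyu Hyv.
apply/imsetP; exists i' => //.
move: (congr1 (fun z : hvert n => z i') (etrans (esym Hv) Hv')).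
rewrite !ffunE eqxx (negbTE (Hij' : i' != j')) !inE.
by case: (u i'); case: (i' == i); case: (i' == j).
Qed.

Lemma common u i a c : exists2 x, x \in nb u &
  (x \in nb (flip (flip u i) a) /\ x \in nb (flip (flip u i) c)).
Proof.
exists (flip u i); first by rewrite inE adj_flip.
by rewrite !inE !(adj_sym (flip (flip u i) _)) !adj_flip.
Qed.

Lemma triangle u v w : u != v -> u != w -> v != w ->
  nb u :&: nb v != set0 -> nb u :&: nb w != set0 -> nb v :&: nb w != set0 ->
  exists x, [/\ x \in nb u, x \in nb v & x \in nb w].
Proof.
move=> Huv Huw Hvw /set0Pn [x1] /setIP [H1 H2] /set0Pn [x2] /setIP [H3 H4]
  /set0Pn [x3] /setIP [H5 H6].
have [i [a [Hia _ Hv]]] := inter_shape Huv H1 H2.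
have [c [d [Hcd _ Hw]]] := inter_shape Huw H3 H4.
have [e [f [Hef _ Hw']]] := inter_shape Hvw H5 H6.
have H : forall k, (k == i) (+) (k == a) (+) (k == e) (+) (k == f)
                   = (k == c) (+) (k == d).
  move=> k; move: (congr1 (fun z : hvert n => z k) (etrans (esym Hw) Hw')).
  rewrite Hv !ffunE -!addbA; case: (u k) => /=; last by [].
  by move/negb_inj.
have Hcase : [|| i == c, i == d, a == c | a == d].
  apply/negPn/negP; rewrite !negb_or => /and4P [/negbTE ic /negbTE id
     /negbTE ac /negbTE ad].
  apply: (@xor3 _ i a c e f Hia); [by rewrite ic | by rewrite ac | | | ].
  - by have := H i; rewrite eqxx ic id (negbTE Hia); case: (i == e); case: (i == f).
  - by have := H a; rewrite eqxx ac ad (eq_sym a i) (negbTE Hia); case: (a == e); case: (a == f).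
  - by have := H c; rewrite eqxx (negbTE Hcd) (eq_sym c i) ic (eq_sym c a) ac; case: (c == e); case: (c == f).
case/or4P: Hcase => /eqP E; subst.
- by have [x ? [? ?]] := common u c a d; exists x.
- by have [x ? [? ?]] := common u d a c; exists x; split=> //; rewrite flipC.
- by have [x ? [? ?]] := common u c i d; exists x; split=> //; rewrite flipC.
- by have [x ? [? ?]] := common u d i c; exists x; split=> //; rewrite flipC.
Qed.

End Cube.
Ltac bcase x A B C D := rewrite !inE; case: (x \in A); case: (x \in B); case: (x \in C); case: (x \in D).

Lemma count4 (T : finType) (A B C D : {set T}) n :
  #|A| = n -> #|B| = n -> #|C| = n -> #|D| = n ->
  #|A :&: B| <= 2 -> #|A :&: C| <= 2 -> #|A :&: D| <= 2 ->
  #|B :&: C| <= 2 -> #|B :&: D| <= 2 -> #|C :&: D| <= 2 ->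
  (0 < #|A :&: B| -> 0 < #|A :&: C| -> 0 < #|B :&: C| -> 0 < #|A :&: B :&: C|) ->
  (0 < #|A :&: B| -> 0 < #|A :&: D| -> 0 < #|B :&: D| -> 0 < #|A :&: B :&: D|) ->
  (0 < #|A :&: C| -> 0 < #|A :&: D| -> 0 < #|C :&: D| -> 0 < #|A :&: C :&: D|) ->
  (0 < #|B :&: C| -> 0 < #|B :&: D| -> 0 < #|C :&: D| -> 0 < #|B :&: C :&: D|) ->
  4 * n <= #|A :|: B :|: C :|: D| + 9.
Proof.
move=> hA hB hC hD pAB pAC pAD pBC pBD pCD tABC tABD tACD tBCD.
have E1 := cardsUI A B.
have E2 := cardsUI (A :|: B) C.
have e1 : (A :|: B) :&: C = (A :&: C) :|: (B :&: C).
  by apply/setP => x; bcase x A B C D.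
rewrite e1 in E2.
have E3 := cardsUI (A :&: C) (B :&: C).
have e2 : (A :&: C) :&: (B :&: C) = A :&: B :&: C.
  by apply/setP => x; bcase x A B C D.
rewrite e2 in E3.
have E4 := cardsUI (A :|: B :|: C) D.
have e3 : (A :|: B :|: C) :&: D = (A :&: D) :|: (B :&: D) :|: (C :&: D).
  by apply/setP => x; bcase x A B C D.
rewrite e3 in E4.
have E5 := cardsUI ((A :&: D) :|: (B :&: D)) (C :&: D).
have e4 : ((A :&: D) :|: (B :&: D)) :&: (C :&: D) = (A :&: C :&: D) :|: (B :&: C :&: D).
  by apply/setP => x; bcase x A B C D.
rewrite e4 in E5.
have E6 := cardsUI (A :&: D) (B :&: D).
have e5 : (A :&: D) :&: (B :&: D) = A :&: B :&: D.
  by apply/setP => x; bcase x A B C D.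
rewrite e5 in E6.
have E7 := cardsUI (A :&: C :&: D) (B :&: C :&: D).
have e6 : (A :&: C :&: D) :&: (B :&: C :&: D) = A :&: B :&: C :&: D.
  by apply/setP => x; bcase x A B C D.
rewrite e6 in E7.
have S : forall X Y : {set T}, {subset X <= Y} -> #|X| <= #|Y|.
  by move=> X Y H; apply/subset_leq_card/subsetP.
have s1 : #|A :&: B :&: C| <= #|A :&: B| by apply: S => x; bcase x A B C D.
have s2 : #|A :&: B :&: C| <= #|A :&: C| by apply: S => x; bcase x A B C D.
have s3 : #|A :&: B :&: C| <= #|B :&: C| by apply: S => x; bcase x A B C D.
have s4 : #|A :&: B :&: D| <= #|A :&: B| by apply: S => x; bcase x A B C D.
have s5 : #|A :&: B :&: D| <= #|A :&: D| by apply: S => x; bcase x A B C D.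
have s6 : #|A :&: B :&: D| <= #|B :&: D| by apply: S => x; bcase x A B C D.
have s7 : #|A :&: C :&: D| <= #|A :&: C| by apply: S => x; bcase x A B C D.
have s8 : #|A :&: C :&: D| <= #|A :&: D| by apply: S => x; bcase x A B C D.
have s9 : #|A :&: C :&: D| <= #|C :&: D| by apply: S => x; bcase x A B C D.
have s10 : #|B :&: C :&: D| <= #|B :&: C| by apply: S => x; bcase x A B C D.
have s11 : #|B :&: C :&: D| <= #|B :&: D| by apply: S => x; bcase x A B C D.
have s12 : #|B :&: C :&: D| <= #|C :&: D| by apply: S => x; bcase x A B C D.
have q1 : #|A :&: B :&: C :&: D| <= #|A :&: B :&: C| by apply: S => x; bcase x A B C D.
have q2 : #|A :&: B :&: C :&: D| <= #|A :&: B :&: D| by apply: S => x; bcase x A B C D.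
have q3 : #|A :&: B :&: C :&: D| <= #|A :&: C :&: D| by apply: S => x; bcase x A B C D.
have q4 : #|A :&: B :&: C :&: D| <= #|B :&: C :&: D| by apply: S => x; bcase x A B C D.
lia.
Qed.

Section Main.
Variable n : nat.
Local Notation V := (hvert n).
Variable g : numbering V.
Hypothesis ginj : injective g.
Local Notation p := #|V|.
Local Notation s := (strf (@hadj n) g).

Lemma cardV : p = 2 ^ n.
Proof. by rewrite /hvert card_ffun card_bool card_ord. Qed.

Lemma strf_ge (y x : V) : hadj y x -> numv g y + numv g x <= s.
Proof.
move=> H; rewrite /strf; apply: leq_trans (leq_bigmax y).
exact: (@leq_bigmax_cond _ (fun v => hadj y v) (fun v => numv g y + numv g v) x H).
Qed.

Lemma label_bound (N : {set V}) k :
  (forall x, x \in N -> exists y, hadj y x /\ p <= g y + k) ->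
  #|N| <= s + k - p - 1.
Proof.
move=> H.
rewrite cardE -(size_map (fun x => nat_of_ord (g x))) -(size_iota 0 (s + k - p - 1)).
apply: uniq_leq_size.
  rewrite map_inj_uniq ?enum_uniq // => x1 x2 /ord_inj; exact: ginj.
move=> z /mapP [x]; rewrite mem_enum => /H [y [Hyx Hy]] ->.
have := strf_ge Hyx; rewrite /numv mem_iota => Hs; rewrite /numv in Hs; lia.
Qed.

Lemma preim (j : nat) : j < p -> exists y, nat_of_ord (g y) = j.
Proof.
move=> Hj; have := inj_card_onto ginj (eq_leq (card_ord _)) (Ordinal Hj).
by case/codomP => y Hy; exists y; rewrite -Hy.
Qed.

Lemma bound1 : 2 <= n -> 1 <= p -> p + n <= s.
Proof.
move=> Hn Hp; have [y1 H1] := preim (j := p - 1) ltac:(lia).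
have := @label_bound (nb y1) 1.
rewrite card_nb => H; suff: n <= s + 1 - p - 1 by lia.
apply: H => x; rewrite inE => Hx; exists y1; split => //; lia.
Qed.

Lemma bound2 : 2 <= n -> 2 <= p -> 2 * n + p <= s + 3.
Proof.
move=> Hn Hp; have [y1 H1] := preim (j := p - 1) ltac:(lia).
have [y2 H2] := preim (j := p - 2) ltac:(lia).
have y12 : y1 != y2 by apply/eqP => E; move: H1; rewrite E H2; lia.
have := @label_bound (nb y1 :|: nb y2) 2 => H.
have E := cardsUI (nb y1) (nb y2); rewrite !card_nb in E.
have := inter_le y12.
suff: #|nb y1 :|: nb y2| <= s + 2 - p - 1 by lia.
apply: H => x; rewrite !inE => /orP [] Hx; [exists y1 | exists y2]; split => //; lia.
Qed.

Lemma pos_inter (u v : V) : (exists x, x \in nb u /\ x \in nb v) -> 0 < #|nb u :&: nb v|.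
Proof. by move=> [x [H1 H2]]; apply/card_gt0P; exists x; rewrite inE H1 H2. Qed.

Lemma tri (u v w : V) : u != v -> u != w -> v != w ->
  0 < #|nb u :&: nb v| -> 0 < #|nb u :&: nb w| -> 0 < #|nb v :&: nb w| ->
  0 < #|nb u :&: nb v :&: nb w|.
Proof.
move=> a b c; rewrite !card_gt0 => d e f.
have [x [X1 X2 X3]] := triangle a b c d e f.
by apply/set0Pn; exists x; rewrite !in_setI X1 X2 X3.
Qed.

Lemma bound4 : 3 <= n -> 4 <= p -> 4 * n + p <= s + 12.
Proof.
move=> Hn Hp; have [y1 H1] := preim (j := p - 1) ltac:(lia).
have [y2 H2] := preim (j := p - 2) ltac:(lia).
have [y3 H3] := preim (j := p - 3) ltac:(lia).
have [y4 H4] := preim (j := p - 4) ltac:(lia).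
have y12 : y1 != y2 by apply/eqP => E; move: H1; rewrite E H2; lia.
have y13 : y1 != y3 by apply/eqP => E; move: H1; rewrite E H3; lia.
have y14 : y1 != y4 by apply/eqP => E; move: H1; rewrite E H4; lia.
have y23 : y2 != y3 by apply/eqP => E; move: H2; rewrite E H3; lia.
have y24 : y2 != y4 by apply/eqP => E; move: H2; rewrite E H4; lia.
have y34 : y3 != y4 by apply/eqP => E; move: H3; rewrite E H4; lia.
have := @count4 _ (nb y1) (nb y2) (nb y3) (nb y4) n (card_nb _) (card_nb _)
  (card_nb _) (card_nb _) (inter_le y12) (inter_le y13) (inter_le y14)
  (inter_le y23) (inter_le y24) (inter_le y34) (tri y12 y13 y23)
  (tri y12 y14 y24) (tri y13 y14 y34) (tri y23 y24 y34).
suff: #|nb y1 :|: nb y2 :|: nb y3 :|: nb y4| <= s + 4 - p - 1 by lia.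
apply: label_bound => x; rewrite !inE => /orP [/orP [/orP [] | ] | ] Hx;
  [exists y1 | exists y2 | exists y3 | exists y4]; split => //; lia.
Qed.

End Main.

Lemma str_ge n L : L <= 2 * 2 ^ n ->
  (forall g : numbering (hvert n), injective g -> L <= strf (@hadj n) g) ->
  L <= str_hypercube n.
Proof.
move=> H0 H; rewrite /str_hypercube /strength.
apply: (big_ind (fun x => L <= x)).
- by rewrite cardV.
- by move=> x y Hx Hy; rewrite leq_min Hx Hy.
- by move=> g /injectiveP; apply: H.
Qed.

Lemma pow_ge n : 4 <= n -> 4 * n <= 2 ^ n.
Proof.
elim: n => [|n IH] //; rewrite ltnS leq_eqVlt => /orP [/eqP <- //|Hn].
rewrite expnS; have := IH Hn; lia.
Qed.

Theorem mainTheorem17 :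
  6 <= str_hypercube 2 /\ 11 <= str_hypercube 3 /\ 21 <= str_hypercube 4 /\
  (forall n : nat, 5 <= n -> 2 ^ n + 4 * n - 12 <= str_hypercube n).
Proof.
split; [|split; [|split]].
- apply: str_ge => // g gi; have := bound1 gi; rewrite cardV /= => /(_ isT isT); lia.
- apply: str_ge => // g gi; have := bound1 gi; rewrite cardV /= => /(_ isT isT); lia.
- apply: str_ge => // g gi; have := bound2 gi; rewrite cardV /= => /(_ isT isT); lia.
- move=> n Hn; have P := pow_ge (ltnW Hn).
  apply: str_ge; first lia.
  move=> g gi; have := bound4 gi; rewrite cardV => H; have := H ltac:(lia) ltac:(lia); lia.
Qed.
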